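(* Let $R$ be a commutative ring, let $n$ be a power of $2$, and let $A,B\in R[x]$ be polynomials of degree $n-1$. For an integer $m\ge1$ write $\ell(m)=\lfloor\log_2 m\rfloor$. Then $$A(x)B(x)=\frac{1-x^n}{1-x}\bigl(A(x)\odot B(x)\bigr)-\sum_{m=1}^{n-1}\frac{1-x^{2^{\ell(m)}}}{(1-x)\,x^m}\,U_m(x)\,V_m(x),$$ where $$U_m(x)=\Bigl(\frac{(1-x^n)\,x^m}{1-x^{2^{\ell(m)+1}}}\Bigr)\odot\Bigl(\bigl(1-x^{2^{\ell(m)}}\bigr)A(x)\Bigr),\qquad V_m(x)=\Bigl(\frac{(1-x^n)\,x^m}{1-x^{2^{\ell(m)+1}}}\Bigr)\odot\Bigl(\bigl(1-x^{2^{\ell(m)}}\bigr)B(x)\Bigr).$$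
   Context: For formal power series (in particular polynomials) $P=\sum_i p_ix^i$ and $Q=\sum_i q_ix^i$, the termwise product is $P\odot Q=\sum_i p_iq_ix^i$. The quotients $\frac{1-x^n}{1-x}=1+x+\dots+x^{n-1}$, $\frac{1-x^n}{1-x^{2^{j}}}=\sum_{i=0}^{n/2^j-1}x^{i2^j}$ (for $2^j\le n$) and $\frac{1-x^{2^j}}{1-x}=1+x+\dots+x^{2^j-1}$ denote the corresponding polynomials; the division by $x^m$ is exact since $U_m$ and $V_m$ are divisible by $x^m$. *)

(* Defs.v *)
From mathcomp Require Import all_boot all_order all_algebra.
Set Implicit Arguments. Unset Strict Implicit. Unset Printing Implicit Defensive.
Import GRing.Theory.
Local Open Scope ring_scope.

Definition hadamard (R : comNzRingType) (p q : {poly R}) : {poly R} :=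
  \poly_(i < size p) (p`_i * q`_i).

(* (1 - x^N)/(1 - x) = 1 + x + ... + x^(N-1) *)
Definition geomX (R : comNzRingType) (N : nat) : {poly R} := \sum_(i < N) 'X^i.

(* (1 - x^N)/(1 - x^(2^j)) = sum_{i=0}^{N/2^j - 1} x^(i 2^j)  (for 2^j | N) *)
Definition geomStep (R : comNzRingType) (N j : nat) : {poly R} :=
  \sum_(i < N %/ 2 ^ j) 'X^(i * 2 ^ j).

Definition ell (m : nat) : nat := trunc_log 2 m.

Definition UV (R : comNzRingType) (n m : nat) (P : {poly R}) : {poly R} :=
  hadamard ('X^m * geomStep R n (ell m).+1) ((1 - 'X^(2 ^ ell m)) * P).

(* Main.v *)
Require Import Defs.
From mathcomp Require Import all_boot all_order all_algebra zify ring.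
Import GRing.Theory.

Lemma dvd_sub_mod m d i : (m < d)%N -> (m <= i)%N -> (d %| i - m)%N = (i %% d == m)%N.
Proof.
move=> md mi; apply/idP/eqP.
  case/dvdnP => c hc; have -> : i = (c * d + m)%N by rewrite -hc subnK.
  by rewrite modnMDl modn_small.
move=> hm; rewrite {1}(divn_eq i d) hm addnK; exact: dvdn_mull.
Qed.

Lemma mod_half (s L : nat) : (0 < L)%N ->
  (s %% L)%N = (if s %% (2 * L) < L then s %% (2 * L) else s %% (2 * L) - L)%N.
Proof.
move=> L0; rewrite -(modn_dvdm s (dvdn_mull 2 (dvdnn L))).
have hr : (s %% (2 * L) < 2 * L)%N by rewrite ltn_pmod // muln_gt0.
move: (s %% (2 * L)) hr => r hr; case: ltnP => h; first by rewrite modn_small.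
by rewrite -{1}(subnK h) modnDr modn_small //; lia.
Qed.

Lemma mod_shift (s L : nat) : (0 < L)%N ->
  ((s + L) %% (2 * L))%N = (if s %% (2 * L) < L then s %% (2 * L) + L else s %% (2 * L) - L)%N.
Proof.
move=> L0; rewrite -modnDml.
have hr : (s %% (2 * L) < 2 * L)%N by rewrite ltn_pmod // muln_gt0.
move: (s %% (2 * L)) hr => r hr; case: ltnP => h; first by rewrite modn_small //; lia.
have -> : (r + L = (r - L) + 2 * L)%N by lia.
by rewrite modnDr modn_small //; lia.
Qed.

Local Open Scope ring_scope.
Lemma drop_polyXn (R : comNzRingType) m e : (m <= e)%N ->
  drop_poly m ('X^e : {poly R}) = 'X^(e - m).
Proof.
move=> me; rewrite -[X in drop_poly _ X]mul1r drop_polyMXn.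
have -> : (m - e = 0)%N by lia.
by rewrite drop_poly0l mul1r.
Qed.
Lemma hadamardD (R : comNzRingType) (p q1 q2 : {poly R}) :
  hadamard p (q1 + q2) = hadamard p q1 + hadamard p q2.
Proof. by apply/polyP => i; rewrite coefD !coef_poly coefD; case: ifP => _; by rewrite ?mulrDr ?addr0. Qed.

Lemma hadamardZ (R : comNzRingType) (p q : {poly R}) c :
  hadamard p (c *: q) = c *: hadamard p q.
Proof. by apply/polyP => i; rewrite coefZ !coef_poly coefZ; case: ifP => _; rewrite ?mulr0 // mulrCA. Qed.

Lemma hadamardN (R : comNzRingType) (p q : {poly R}) :
  hadamard p (- q) = - hadamard p q.
Proof. by rewrite -scaleN1r hadamardZ scaleN1r. Qed.

Lemma hadamard_sum (R : comNzRingType) (p : {poly R}) (I : Type) (r : seq I) (F : I -> {poly R}) :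
  hadamard p (\sum_(i <- r) F i) = \sum_(i <- r) hadamard p (F i).
Proof.
elim: r => [|x r IH]; rewrite ?big_nil ?big_cons.
  by apply/polyP => i; rewrite coef_poly coef0 mulr0 if_same.
by rewrite hadamardD IH.
Qed.

Lemma hadamardXn (R : comNzRingType) (p : {poly R}) j :
  hadamard p 'X^j = p`_j *: 'X^j.
Proof.
apply/polyP => i; rewrite coef_poly coefZ !coefXn.
case: ifP => [_|/negbT]; first by case: eqP => [->|]; rewrite ?mulr1 ?mulr0.
rewrite -leqNgt => hi; case: (eqVneq i j) => [<-|]; first by rewrite nth_default // mul0r.
by rewrite mulr0.
Qed.

Lemma geomX_add (R : comNzRingType) a b :
  geomX R (a + b) = geomX R a + 'X^a * geomX R b.
Proof.
rewrite /geomX big_split_ord /=; congr (_ + _).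
by rewrite mulr_sumr; apply: eq_bigr => i _; rewrite exprD.
Qed.

Lemma geomX1 (R : comNzRingType) : geomX R 1 = 1.
Proof. by rewrite /geomX big_ord1 expr0. Qed.

Lemma coef_geomStep (R : comNzRingType) N d j : (0 < d)%N ->
  (\sum_(a < N) ('X^(a * d) : {poly R}))`_j = ((j < N * d) && (d %| j))%N%:R.
Proof.
move=> d0; elim: N => [|N IH]; first by rewrite big_ord0 coef0 mul0n.
rewrite big_ord_recr /= coefD IH coefXn.
case: (eqVneq j (N * d)) => [->|hne].
  by rewrite ltnn dvdn_mull //= add0r mulSn addnC -{1}(addn0 (N * d)) ltn_add2l d0.
rewrite addr0; congr ((nat_of_bool _)%:R); apply/andP/andP => -[h1 h2]; split => //.
  by rewrite mulSn addnC; apply: ltn_addr.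
case/dvdnP: h2 => c hc; subst j.
move: h1 hne; rewrite ltn_pmul2r // ltnS leq_eqVlt => /orP[/eqP->|]; first by rewrite eqxx.
by rewrite ltn_pmul2r.
Qed.

Lemma coef_g (R : comNzRingType) n m d i : (0 < d)%N -> (m < d)%N -> (d %| n)%N -> (i < n + m)%N ->
  (('X^m * \sum_(a < n %/ d) 'X^(a * d)) : {poly R})`_i = (i %% d == m)%N%:R.
Proof.
move=> d0 md dn hi; rewrite coefXnM; case: ltnP => h.
  have : (i %% d <= i)%N := leq_mod i d.
  by case: eqP => // -> ; lia.
rewrite coef_geomStep // divnK // -dvd_sub_mod //.
by have -> : (i - m < n)%N by lia.
Qed.

Lemma UV_Xn (R : comNzRingType) n k l m s : n = (2 ^ k)%N -> (l < k)%N ->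
  (2 ^ l <= m < 2 ^ l.+1)%N -> (s < n)%N ->
  UV n m ('X^s : {poly R}) = (m == 2 ^ l + s %% 2 ^ l)%N%:R *:
     (if (s %% 2 ^ l.+1 < 2 ^ l)%N then - 'X^(s + 2 ^ l) else 'X^s).
Proof.
move=> hn lk hm hs; have hell : ell m = l by apply: trunc_log_eq.
rewrite /UV /geomStep hell.
have -> : (1 - 'X^(2 ^ l)) * 'X^s = 'X^s - 'X^(s + 2 ^ l) :> {poly R}.
  by rewrite mulrBl mul1r addnC exprD.
have dn : (2 ^ l.+1 %| n)%N by rewrite hn dvdn_exp2l.
have hL : (0 < 2 ^ l)%N by rewrite expn_gt0.
rewrite hadamardD hadamardN !hadamardXn !coef_g ?expn_gt0 //.
2-5: by move: hm => /andP[hm1 hm2]; lia.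
rewrite expnS in hm *; rewrite mod_shift // (mod_half s _ hL).
move: (2 ^ l)%N hL hm => L hL hm.
have hr : (s %% (2 * L) < 2 * L)%N by rewrite ltn_pmod // muln_gt0 hL.
move: (s %% (2 * L))%N hr => r hr.
case: ltnP => h.
  have -> : (r == m) = false by apply/eqP; lia.
  have -> : (r + L == m) = (m == L + r) by apply/eqP/eqP; lia.
  by rewrite scale0r sub0r scalerN.
have -> : (r - L == m)%N = false by apply/eqP; lia.
have -> : (r == m) = (m == L + (r - L))%N by apply/eqP/eqP; lia.
by rewrite scale0r subr0.
Qed.

Lemma sum_nat_eq (R : comNzRingType) a b x (F : nat -> {poly R}) :
  \sum_(a <= m < b) (if m == x then F m else 0) = if (a <= x < b)%N then F x else 0.
Proof.
case: ifP => hx.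
  case/andP: hx => h1 h2.
  rewrite (@big_cat_nat _ _ _ x) ?(ltnW h2) //= (@big_ltn _ _ _ x b) // eqxx.
  rewrite !big1_seq ?add0r ?addr0 // => m; rewrite mem_index_iota => /andP[hm1 hm2];
  by rewrite ifN //; apply/eqP; lia.
rewrite big1_seq // => m /andP[_ hm2]; rewrite mem_index_iota in hm2.
by case: eqP => // hmx; move: hx; rewrite -hmx hm2.
Qed.

Definition ff (R : comNzRingType) (s t l : nat) : {poly R} :=
  if (s %% 2 ^ l == t %% 2 ^ l)%N then 'X^(s + t - s %% 2 ^ l) * geomX R (2 ^ l) else 0.

Definition wX (R : comNzRingType) (L s : nat) : {poly R} :=
  if (s %% (2 * L) < L)%N then - 'X^(s + L) else 'X^s.

Lemma level_sum (R : comNzRingType) n k l s t : n = (2 ^ k)%N -> (l < k)%N ->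
  (s < n)%N -> (t < n)%N ->
  \sum_(2 ^ l <= m < 2 ^ l.+1) geomX R (2 ^ ell m) * drop_poly m (UV n m 'X^s * UV n m 'X^t)
  = ff R s t l.+1 - ff R s t l.
Proof.
move=> hn lk hs ht.
rewrite (eq_big_nat _ _ (F2 := fun m => if m == (2 ^ l + s %% 2 ^ l)%N then
   (s %% 2 ^ l == t %% 2 ^ l)%N%:R *: (geomX R (2 ^ l) * drop_poly (2 ^ l + s %% 2 ^ l)
      (wX R (2 ^ l) s * wX R (2 ^ l) t)) else 0)); last first.
  move=> m hm; have hell : ell m = l by apply: trunc_log_eq.
  rewrite hell !(@UV_Xn R n k l m _ hn lk hm) // /wX -expnS.
  case: eqP => [->|hne]; last by rewrite scale0r mul0r drop_poly0r mulr0.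
  by rewrite eqn_add2l scale1r -scalerAr drop_polyZ scalerAr.
rewrite sum_nat_eq.
have hL : (0 < 2 ^ l)%N by rewrite expn_gt0.
rewrite leq_addr /= expnS mul2n -addnn ltn_add2l ltn_pmod //.
rewrite /ff /wX expnS (mod_half s _ hL) (mod_half t _ hL).
have := leq_mod s (2 * 2 ^ l); have := leq_mod t (2 * 2 ^ l).
have : (s %% (2 * 2 ^ l) < 2 * 2 ^ l)%N by rewrite ltn_pmod // muln_gt0 hL.
have : (t %% (2 * 2 ^ l) < 2 * 2 ^ l)%N by rewrite ltn_pmod // muln_gt0 hL.
rewrite mul2n -addnn (geomX_add R (2 ^ l) (2 ^ l)); move: (geomX R (2 ^ l)) => G.
move: (2 ^ l)%N hL (s %% (2 ^ l + 2 ^ l))%N (t %% (2 ^ l + 2 ^ l))%N => L hL rs rt hrt hrs hts hss.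
have drN : forall m e, (m <= e)%N -> drop_poly m (- 'X^e : {poly R}) = - 'X^(e - m).
  by move=> m e me; rewrite -scaleN1r drop_polyZ drop_polyXn // scaleN1r.
case: (ltnP rs L) => h1; case: (ltnP rt L) => h2.
- case: (eqVneq rs rt) => [e|hne]; last by rewrite scale0r subr0.
  rewrite scale1r mulrNN -exprD drop_polyXn; last by lia.
  have -> : (s + L + (t + L) - (L + rs) = (s + t - rs) + L)%N by lia.
  rewrite exprD; move: ('X^(s + t - rs)) ('X^L) => P Q; ring.
- have -> : (rs == rt) = false by apply/eqP; lia.
  case: (eqVneq rs (rt - L)%N) => [e|hne]; last by rewrite scale0r subr0.
  rewrite scale1r mulNr -exprD drN; last by lia.
  have -> : (s + L + t - (L + rs) = s + t - rs)%N by lia.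
  by rewrite sub0r mulrN mulrC.
- have -> : (rs == rt) = false by apply/eqP; lia.
  case: (eqVneq (rs - L)%N rt) => [e|hne]; last by rewrite scale0r subr0.
  rewrite scale1r mulrN -exprD drN; last by lia.
  have -> : (s + (t + L) - (L + (rs - L)) = s + t - (rs - L))%N by lia.
  by rewrite sub0r mulrN mulrC.
- have -> : (rs - L == rt - L)%N = (rs == rt) by apply/eqP/eqP; lia.
  case: (eqVneq rs rt) => [e|hne]; last by rewrite scale0r subr0.
  rewrite scale1r -exprD drop_polyXn; last by lia.
  have -> : (s + t - (L + (rs - L)) = s + t - rs)%N by lia.
  have -> : (s + t - (rs - L) = (s + t - rs) + L)%N by lia.
  rewrite exprD; move: ('X^(s + t - rs)) ('X^L) => P Q; ring.
Qed.

Lemma split_levels (R : comNzRingType) k (F : nat -> {poly R}) :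
  \sum_(1 <= m < 2 ^ k) F m = \sum_(0 <= l < k) \sum_(2 ^ l <= m < 2 ^ l.+1) F m.
Proof.
elim: k => [|k IH]; first by rewrite expn0 !big_geq.
rewrite big_nat_recr //= -IH (@big_cat_nat _ _ _ (2 ^ k)) //.
  by rewrite expn_gt0.
by rewrite leq_exp2l.
Qed.

Lemma pair_id (R : comNzRingType) n k s t : n = (2 ^ k)%N -> (s < n)%N -> (t < n)%N ->
  'X^(s + t) = (s == t)%:R *: (geomX R n * 'X^s)
    - \sum_(1 <= m < n) geomX R (2 ^ ell m) * drop_poly m (UV n m 'X^s * UV n m 'X^t).
Proof.
move=> hn hs ht.
rewrite {2}hn split_levels (telescope_sumr_eq (ff R s t)) //; last first.
  by move=> l /andP[_ hl]; rewrite (@level_sum R n k l s t hn hl hs ht).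
rewrite /ff expn0 !modn1 eqxx subn0 geomX1 mulr1 -hn !modn_small //.
case: (eqVneq s t) => [<-|hne].
  by rewrite scale1r addKn mulrC opprB addrC subrK.
by rewrite scale0r sub0r opprB subr0.
Qed.

Theorem mainTheorem2 (R : comNzRingType) (n k : nat) (A B : {poly R})
  (hn : n = (2 ^ k)%N) (hA : size A = n) (hB : size B = n) :
  A * B = geomX R n * hadamard A B
          - \sum_(1 <= m < n)
              geomX R (2 ^ ell m) * drop_poly m (UV n m A * UV n m B).
Proof.
have eA : A = \sum_(s < n) A`_s *: 'X^s by rewrite -{1}(coefK A) poly_def hA.
have eB : B = \sum_(s < n) B`_s *: 'X^s by rewrite -{1}(coefK B) poly_def hB.
have hUV : forall m (P : {poly R}), P = \sum_(s < n) P`_s *: 'X^s ->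
    UV n m P = \sum_(s < n) P`_s *: UV n m 'X^s.
  move=> m P eP; transitivity (UV n m (\sum_(s < n) P`_s *: 'X^s)); first by rewrite -eP.
  rewrite /UV [(_ - _) * _]mulr_sumr hadamard_sum; apply: eq_bigr => s _.
  by rewrite -scalerAr hadamardZ.
have hprod : forall m, drop_poly m (UV n m A * UV n m B) =
    \sum_(s < n) \sum_(t < n) (A`_s * B`_t) *: drop_poly m (UV n m 'X^s * UV n m 'X^t).
  move=> m; rewrite (hUV m A eA) (hUV m B eB) mulr_suml drop_poly_sum; apply: eq_bigr => s _.
  rewrite mulr_sumr drop_poly_sum; apply: eq_bigr => t _.
  by rewrite -scalerAl -scalerAr scalerA drop_polyZ.
have hcorr : \sum_(1 <= m < n) geomX R (2 ^ ell m) * drop_poly m (UV n m A * UV n m B)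
   = \sum_(s < n) \sum_(t < n) (A`_s * B`_t) *:
       \sum_(1 <= m < n) geomX R (2 ^ ell m) * drop_poly m (UV n m 'X^s * UV n m 'X^t).
  transitivity (\sum_(1 <= m < n) \sum_(s < n) \sum_(t < n) (A`_s * B`_t) *:
       (geomX R (2 ^ ell m) * drop_poly m (UV n m 'X^s * UV n m 'X^t))).
    apply: eq_bigr => m _; rewrite hprod mulr_sumr; apply: eq_bigr => s _.
    by rewrite mulr_sumr; apply: eq_bigr => t _; rewrite scalerAr.
  rewrite exchange_big; apply: eq_bigr => s _; rewrite exchange_big.
  by apply: eq_bigr => t _; rewrite scaler_sumr.
have hhad : geomX R n * hadamard A B = \sum_(s < n) (A`_s * B`_s) *: (geomX R n * 'X^s).
  by rewrite /hadamard hA poly_def mulr_sumr; apply: eq_bigr => s _; rewrite scalerAr.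
have hAB : A * B = \sum_(s < n) \sum_(t < n) (A`_s * B`_t) *: 'X^(s + t).
  rewrite {1}eA {1}eB mulr_suml; apply: eq_bigr => s _; rewrite mulr_sumr.
  by apply: eq_bigr => t _; rewrite -scalerAl -scalerAr scalerA exprD.
rewrite hcorr hhad hAB -sumrB; apply: eq_bigr => s _.
rewrite (eq_bigr (fun t : 'I_n => (A`_s * B`_t) *: ((s == t :> nat)%:R *: (geomX R n * 'X^s))
   - (A`_s * B`_t) *: \sum_(1 <= m < n) geomX R (2 ^ ell m) *
        drop_poly m (UV n m 'X^s * UV n m 'X^t))); last first.
  by move=> t _; rewrite -scalerBr -(@pair_id R n k s t hn).
rewrite sumrB; congr (_ - _).
rewrite (bigD1 s) //= eqxx scale1r big1 ?addr0 // => t hts.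
have -> : (s == t :> nat) = false.
  by apply/eqP => e; move/eqP: hts; apply; apply: val_inj.
by rewrite scale0r scaler0.
Qed.
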